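(* Let $n\geq1$, let $a_1,\dots,a_{n-1}\in\mathbb{R}$ and $\alpha\in\mathbb{C}$, and let $$O_\alpha(z)=z^n\,\frac{\alpha+a_{n-1}z+\dots+a_1 z^{n-1}+z^n}{1+a_1 z+\dots+a_{n-1}z^{n-1}+\alpha z^n},$$ where $\alpha\neq0$ and $1+a_1+\dots+a_{n-1}+\alpha\neq0$, so that $z=1$ is a fixed point of $O_\alpha$. Let $$A=2n+2\sum_{j=1}^{n-1}(n-j)a_j,\qquad A'=1+\sum_{j=1}^{n-1}a_j,$$ with $A'\neq0$. Then: (i) $z=1$ is attracting if $|\alpha+A'|>|A|$; (ii) $z=1$ is indifferent if $|\alpha+A'|=|A|$; (iii) $z=1$ is repelling if $|\alpha+A'|<|A|$. Moreover, if $A=0$, the fixed point $z=1$ is superattracting.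
   Context: For a fixed point $z_0$ of a rational map $R$ with multiplier $\lambda=R'(z_0)$, $z_0$ is attracting if $|\lambda|<1$, superattracting if $\lambda=0$, repelling if $|\lambda|>1$, and indifferent if $|\lambda|=1$. *)

(* Defs.v *)
From mathcomp Require Import all_boot all_order all_algebra.
From mathcomp Require Export complex.
Set Implicit Arguments. Unset Strict Implicit. Unset Printing Implicit Defensive.
Import Order.TTheory GRing.Theory Num.Theory.
Local Open Scope ring_scope.

Section RationalMaps.
Variable F : numFieldType.

Definition ratmap_eval (p q : {poly F}) (z : F) : F := p.[z] / q.[z].

Definition is_fixed_point (p q : {poly F}) (z0 : F) : Prop :=
  q.[z0] != 0 /\ ratmap_eval p q z0 = z0.

Definition ratmap_deriv (p q : {poly F}) (z0 : F) : F :=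
  (p^`() * q - p * q^`()).[z0] / (q.[z0]) ^+ 2.

Definition multiplier (p q : {poly F}) (z0 : F) : F := ratmap_deriv p q z0.

Definition attracting_fp p q z0 :=
  is_fixed_point p q z0 /\ `|multiplier p q z0| < 1.
Definition superattracting_fp p q z0 :=
  is_fixed_point p q z0 /\ multiplier p q z0 = 0.
Definition repelling_fp p q z0 :=
  is_fixed_point p q z0 /\ `|multiplier p q z0| > 1.
Definition indifferent_fp p q z0 :=
  is_fixed_point p q z0 /\ `|multiplier p q z0| = 1.
End RationalMaps.

Section Oalpha.
Variable R : rcfType.
Local Open Scope complex_scope.

Definition O_num_factor (n : nat) (a : nat -> R) (alpha : R[i]) : {poly R[i]} :=
  alpha%:P + \sum_(1 <= j < n) ((a (n - j)%N)%:C)%:P * 'X^j + 'X^n.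

Definition O_den (n : nat) (a : nat -> R) (alpha : R[i]) : {poly R[i]} :=
  1 + \sum_(1 <= j < n) ((a j)%:C)%:P * 'X^j + alpha%:P * 'X^n.

Definition O_num (n : nat) (a : nat -> R) (alpha : R[i]) : {poly R[i]} :=
  'X^n * O_num_factor n a alpha.
End Oalpha.

(* Main.v *)
Require Import Defs.
From mathcomp Require Import all_boot all_order all_algebra.
From mathcomp Require Import complex.
From mathcomp Require Import zify ring.
Import Order.TTheory GRing.Theory Num.Theory.
Local Open Scope ring_scope.
Local Open Scope complex_scope.

Section S.
Variable C : comNzRingType.
Lemma hs_aux n (c : nat -> C) : (\sum_(1<=j<n) (c j)%:P * 'X^j).[1] = \sum_(1<=j<n) c j.
Proof. rewrite horner_sum; apply: eq_bigr => j _. by rewrite hornerCM hornerXn expr1n mulr1. Qed.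
Lemma hd_aux n (c : nat -> C) : ((\sum_(1<=j<n) (c j)%:P * 'X^j)^`()).[1] = \sum_(1<=j<n) c j * j%:R.
Proof. rewrite (big_morph (@deriv C) (@derivD C) (@deriv0 C)) horner_sum; apply: eq_bigr => j _.
by rewrite mul_polyC derivZ derivXn hornerZ hornerMn hornerXn expr1n mulr_natr. Qed.
Lemma rev_aux n (f : nat -> C) : \sum_(1<=j<n) f (n - j)%N = \sum_(1<=j<n) f j.
Proof. rewrite big_nat_rev; apply: eq_big_nat => j /andP[h1 h2]; congr f; lia. Qed.
Lemma rev_aux2 n (f : nat -> C) : \sum_(1<=j<n) f (n - j)%N * j%:R = \sum_(1<=j<n) f j * (n - j)%N%:R.
Proof. rewrite big_nat_rev; apply: eq_big_nat => j /andP[h1 h2].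
have -> : (n - (1 + n - j.+1))%N = j by lia.
by have -> : (1 + n - j.+1)%N = (n - j)%N by lia. Qed.
End S.

Theorem proposition4p2 (R : rcfType) (n : nat) (a : nat -> R) (alpha : R[i])
  (hn : (1 <= n)%N)
  (halpha : alpha != 0)
  (hfix : 1 + \sum_(1 <= j < n) (a j)%:C + alpha != 0)
  (hA' : 1 + \sum_(1 <= j < n) a j != 0) :
  let A : R := 2 * n%:R + 2 * \sum_(1 <= j < n) (n - j)%N%:R * a j in
  let A' : R := 1 + \sum_(1 <= j < n) a j in
  let p := O_num n a alpha in
  let q := O_den n a alpha in
  [/\ `|alpha + A'%:C| > `|A%:C| -> attracting_fp p q 1,
      `|alpha + A'%:C| = `|A%:C| -> indifferent_fp p q 1,
      `|alpha + A'%:C| < `|A%:C| -> repelling_fp p q 1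
    & A = 0 -> superattracting_fp p q 1].
Proof.
move=> A A' p q.
set Sa := \sum_(1 <= j < n) (a j)%:C.
set B := alpha + A'%:C.
have hB : B = 1 + Sa + alpha.
  by rewrite /B /A' rmorphD rmorph1 rmorph_sum addrC.
have hBn : B != 0 by rewrite hB; exact: hfix.
have hQ1 : q.[1] = B.
  by rewrite hB /q /O_den !hornerE hs_aux expr1n mulr1.
have hP1 : (O_num_factor n a alpha).[1] = B.
  rewrite hB /O_num_factor !hornerE hs_aux.
  rewrite (rev_aux _ n (fun j => (a j)%:C)) /Sa expr1n; ring.
have hp1 : p.[1] = B.
  rewrite /p /O_num hornerM hornerXn expr1n mul1r; exact: hP1.
have hfp : is_fixed_point p q 1.
  by split; rewrite ?hQ1 // /ratmap_eval hp1 hQ1 divff.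
set Sw := \sum_(1 <= j < n) (a j)%:C * j%:R.
set Sr := \sum_(1 <= j < n) (a j)%:C * (n - j)%N%:R.
have hsum : Sr + Sw = n%:R * Sa.
  rewrite /Sr /Sw -big_split /= /Sa mulr_sumr; apply: eq_big_nat => j /andP[h1 h2].
  by rewrite -mulrDr -natrD subnK ?(ltnW h2) // mulrC.
have hP'1 : (O_num_factor n a alpha)^`().[1] = Sr + n%:R.
  rewrite /O_num_factor !derivD derivC add0r !hornerD hd_aux derivXn hornerMn hornerXn expr1n.
  by rewrite (rev_aux2 _ n (fun j => (a j)%:C)).
have hQ'1 : q^`().[1] = Sw + alpha * n%:R.
  rewrite /q /O_den !derivD derivC add0r !hornerD hd_aux mul_polyC derivZ derivXn hornerZ hornerMn hornerXn expr1n.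
  done.
have hp'1 : p^`().[1] = n%:R * B + Sr + n%:R.
  rewrite /p /O_num derivM hornerD !hornerM derivXn hornerMn !hornerXn !expr1n hP'1.
  have -> : (O_num_factor n a alpha).[1] = B by exact: hP1.
  by rewrite mul1r addrA.
have hlam : multiplier p q 1 = A%:C / B.
  rewrite /multiplier /ratmap_deriv hornerD hornerN !hornerM.
  have -> : p^`().[1] = n%:R * B + Sr + n%:R by exact: hp'1.
  rewrite hornerXn expr1n mul1r.
  have -> : (O_num_factor n a alpha).[1] = B by exact: hP1.
  have -> : q.[1] = B by exact: hQ1.
  have -> : q^`().[1] = Sw + alpha * n%:R by exact: hQ'1.
  have -> : A%:C = 2 * n%:R + 2 * Sr.
    rewrite /A rmorphD !rmorphM rmorph_sum !rmorph_nat /Sr; congr (_ + _ * _).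
    apply: eq_big_nat => j _; rewrite rmorphM rmorph_nat mulrC //.
  have hSw : Sw = n%:R * Sa - Sr by rewrite -hsum; ring.
  have hBn' : 1 + Sa + alpha != 0 by exact: hfix.
  rewrite hSw hB; field.
  exact: hBn'.
have hBn2 : `|B| != 0 by rewrite normr_eq0; exact: hBn.
have hBp : 0 < `|B| by rewrite lt_def hBn2 normr_ge0.
split.
- move=> h; split => //; rewrite hlam normrM normrV ?unitfE //.
  by rewrite ltr_pdivrMr // mul1r.
- move=> h; split => //; rewrite hlam normrM normrV ?unitfE //.
  by rewrite -h divff.
- move=> h; split => //; rewrite hlam normrM normrV ?unitfE //.
  by rewrite ltr_pdivlMr // mul1r.
- move=> h; split => //; by rewrite hlam h rmorph0 mul0r.
Qed.
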